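(* As $n\to\infty$: (i) for fixed $j\ge1$, $\mathbb{E}[D_{n,j}]\sim \frac{\Gamma(j-1/2)}{\Gamma(j)}\,n^{1/2}$ and $\operatorname{Var}[D_{n,j}]\sim\left(\frac{4}{2j-1}-\frac{\Gamma^2(j-1/2)}{\Gamma^2(j)}\right)n$; (ii) if $j=j(n)\le n$ with $j\to\infty$, then $\mathbb{E}[D_{n,j}]\sim (n/j)^{1/2}$; (iii) if $j=j(n)\to\infty$ with $j=o(n)$, then $\operatorname{Var}[D_{n,j}]\sim n/j$; (iv) if $j=j(n)$ with $j/n\to\theta\in(0,1)$, then $\operatorname{Var}[D_{n,j}]\to 1/\theta-1/\sqrt{\theta}$.
   Context: A plane-oriented recursive tree (PORT) is the random sequence of trees $(T_n)_{n\ge1}$ defined as follows. $T_1$ is a single node labeled $1$ (the root). For $n\ge2$, $T_n$ is obtained from $T_{n-1}$ by adding a node labeled $n$ and an edge joining it to a node $i\in\{1,\dots,n-1\}$ of $T_{n-1}$, where, conditionally on $T_1,\dots,T_{n-1}$, node $i$ is chosen with probability $(c_{n-1,i}+1)/(2n-3)$, with $c_{n-1,i}$ the number of children of $i$ in $T_{n-1}$. $D_{n,j}$ denotes the degree of the node labeled $j$ in $T_n$. $a_n\sim b_n$ means $a_n/b_n\to1$. *)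

(* Defs.v *)
From Stdlib Require Import Reals Lra List Arith.
Import ListNotations.
Open Scope R_scope.

(* A history of the PORT up to T_n is the list h of parents
   [p_2; p_3; ...; p_n], where p_k in {1,...,k-1} is the node that node k
   attached to. *)
Definition children (i : nat) (h : list nat) : nat := count_occ Nat.eq_dec h i.

(* All possible histories producing T_n (n >= 1); hist 0 is a dummy. *)
Fixpoint hist (n : nat) : list (list nat) :=
  match n with
  | O => [[]]
  | S O => [[]]
  | S m => flat_map (fun h => map (fun i => h ++ [i]) (seq 1 m)) (hist m)
  end.

(* Probability of a history: node k (k >= 2) attaches to i with probability
   (c_{k-1,i} + 1) / (2k - 3). *)
Fixpoint weight_rev (r : list nat) : R :=
  match r with
  | [] => 1
  | i :: r' =>
      (* r = rev h, h = rev r' ++ [i]; node added has label k = length r' + 2 *)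
      weight_rev r' * (INR (children i r') + 1) / (2 * INR (length r' + 2) - 3)
  end.
Definition weight (h : list nat) : R := weight_rev (rev h).

(* Degree (number of neighbours) of node j in the tree with history h:
   its children, plus the edge to its parent when j >= 2. *)
Definition deg (j : nat) (h : list nat) : nat :=
  (children j h + (if Nat.leb 2 j then 1 else 0))%nat.

Definition Expect (n : nat) (f : list nat -> R) : R :=
  fold_right Rplus 0 (map (fun h => weight h * f h) (hist n)).

Definition ED (n j : nat) : R := Expect n (fun h => INR (deg j h)).
Definition VarD (n j : nat) : R :=
  Expect n (fun h => INR (deg j h) ^ 2) - (ED n j) ^ 2.

Definition asym (a b : nat -> R) : Prop := Un_cv (fun n => a n / b n) 1.

Definition nat_to_infty (j : nat -> nat) : Prop :=
  forall M : nat, exists N : nat, forall n : nat, (N <= n)%nat -> (M <= j n)%nat.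

(* Gamma at half-integers: gamma_half k = Gamma(k + 1/2), via
   Gamma(1/2) = sqrt pi and Gamma(x+1) = x Gamma(x). *)
Fixpoint gamma_half (k : nat) : R :=
  match k with
  | O => sqrt PI
  | S k' => (INR k' + / 2) * gamma_half k'
  end.
Definition gamma_nat (j : nat) : R := INR (fact (j - 1)).

Definition gratio (j : nat) : R := gamma_half (j - 1) / gamma_nat j.

(* Main.v *)
Require Import Defs.
From Stdlib Require Import Reals Lra Lia List ZArith.
From Coquelicot Require Import Coquelicot.
Open Scope R_scope.
Import ListNotations.

Definition Iw (n : nat) : R := RInt (fun x => sin x ^ n) 0 (PI/2).

Lemma ex_Iw n : ex_RInt (fun x => sin x ^ n) 0 (PI/2).
Proof.
  apply (@ex_RInt_continuous R_CompleteNormedModule) => z _.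
  apply continuity_pt_filterlim. 
  apply (continuity_pt_comp sin (fun y => y ^ n)). apply continuity_sin. apply derivable_continuous_pt. apply derivable_pt_pow.
Qed.

Lemma is_Iw n : is_RInt (fun x => sin x ^ n) 0 (PI/2) (Iw n).
Proof. apply (@RInt_correct R_CompleteNormedModule). apply ex_Iw. Qed.

Lemma Iw_rec k : INR (k+2) * Iw (k+2) = INR (k+1) * Iw k.
Proof.
  assert (H : is_RInt (fun x => INR (k+2) * sin x ^ (k+2) - INR (k+1) * sin x ^ k) 0 (PI/2)
     (minus ((fun x => - (sin x ^ (k+1) * cos x)) (PI/2)) ((fun x => - (sin x ^ (k+1) * cos x)) 0))).
  { apply (@is_RInt_derive R_CompleteNormedModule (fun x => - (sin x ^ (k+1) * cos x))).
    - intros x _. auto_derive. auto.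
      pose proof (sin2_cos2 x) as E. unfold Rsqr in E.
      replace (k+2)%nat with (S (S k)) by lia. replace (k+1)%nat with (S k) by lia.
      rewrite !S_INR. simpl. 
      assert (Hc : cos x * cos x = 1 - sin x * sin x) by lra.
      transitivity (-(INR k + 1) * sin x^k * (cos x * cos x) + sin x * sin x * sin x ^ k). ring. rewrite Hc. ring.
    - intros x _. apply continuity_pt_filterlim. 
      reg. }
  simpl in H. rewrite cos_PI2 in H; rewrite sin_0 in H. 
  replace (minus (- (sin (PI / 2) ^ (k + 1) * 0)) (- (0 ^ (k + 1) * cos 0))) with 0 in H.
  2:{ rewrite pow_i; [|lia]. unfold minus, plus, opp; simpl. ring. }
  pose proof (is_RInt_minus _ _ _ _ _ _ (is_RInt_scal _ _ _ (INR (k+2)) _ (is_Iw (k+2)))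
                 (is_RInt_scal _ _ _ (INR (k+1)) _ (is_Iw k))) as H2.
  assert (E := is_RInt_unique _ _ _ _ H). assert (E2 := is_RInt_unique _ _ _ _ H2).
  assert (X : INR (k+2)*Iw(k+2) - INR(k+1)*Iw k = 0).
  { etransitivity; [|exact E]. etransitivity; [symmetry; exact E2|]. reflexivity. }
  lra.
Qed.

Lemma Iw0 : Iw 0 = PI/2.
Proof. unfold Iw. simpl. rewrite RInt_const. unfold scal; simpl. unfold mult; simpl. ring. Qed.

Lemma Iw1 : Iw 1 = 1.
Proof.
  assert (H : is_RInt (fun x => sin x ^ 1) 0 (PI/2) (minus ((fun x => - cos x) (PI/2)) ((fun x => - cos x) 0))).
  { apply (@is_RInt_derive R_CompleteNormedModule (fun x => - cos x)).
    - intros x _. auto_derive. auto. ring.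
    - intros x _. apply continuity_pt_filterlim. reg. }
  apply (@is_RInt_unique R_CompleteNormedModule) in H. unfold Iw. rewrite H. rewrite cos_PI2, cos_0. unfold minus, plus, opp; simpl. ring.
Qed.

Lemma Iw_decr n : Iw (S n) <= Iw n.
Proof.
  unfold Iw. apply RInt_le. pose proof PI_RGT_0; lra. apply ex_Iw. apply ex_Iw.
  intros x Hx. simpl. 
  assert (0 <= sin x). { apply sin_ge_0; pose proof PI_RGT_0; lra. }
  assert (sin x <= 1) by (apply SIN_bound).
  assert (0 <= sin x ^ n) by (apply pow_le; lra). nra.
Qed.

Fixpoint prodr (j d : nat) : R :=
  match d with
  | O => 1
  | S d' => prodr j d' * (2 * INR (j + d')) / (2 * INR (j + d') - 1)
  end.

Lemma prodr_pos j d : (1 <= j)%nat -> 0 < prodr j d.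
Proof.
  intros Hj. induction d; simpl. lra.
  assert (1 <= INR (j+d)) by (apply (le_INR 1); lia).
  apply Rmult_lt_0_compat. apply Rmult_lt_0_compat; lra. apply Rinv_0_lt_compat; lra.
Qed.

Lemma prodr_S j d : prodr j (S d) = prodr j d * (2 * INR (j + d)) / (2 * INR (j + d) - 1).
Proof. reflexivity. Qed.

Lemma Iw_closed m : Iw (2*m) * prodr 1 m = PI/2 /\ Iw (2*m+1) * INR (2*m+1) = prodr 1 m.
Proof.
  induction m as [|m [IH1 IH2]].
  - simpl. rewrite Iw0. replace (0+1)%nat with 1%nat by lia. rewrite Iw1. simpl. lra.
  - pose proof (Iw_rec (2*m)) as R1. pose proof (Iw_rec (2*m+1)) as R2.
    replace (2 * S m)%nat with (2*m+2)%nat by lia. replace (2 * S m + 1)%nat with (2*m+1+2)%nat by lia.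
    rewrite prodr_S. replace (2*m+1+1)%nat with (2*m+2)%nat in R2 by lia.
    rewrite !plus_INR, !mult_INR in *. 
    replace (INR 2) with 2 in * by (simpl; lra). replace (INR 1) with 1 in * by (simpl; lra).
    assert (0 <= INR m) by apply pos_INR.
    split.
    + assert (E : Iw (2*m+2) = (2*INR m+1)/(2*INR m+2) * Iw (2*m)).
      { apply (Rmult_eq_reg_l (2*INR m+2)). rewrite R1. field. lra. lra. }
      rewrite E, <- IH1. field. lra.
    + rewrite <- IH2. 
      assert (E : Iw (2*m+1+2) = (2*INR m+2)/(2*INR m+3) * Iw (2*m+1)).
      { apply (Rmult_eq_reg_l (2*INR m+3)). replace (2*INR m+3) with (2*INR m+1+2) by ring. rewrite R2. field. lra. lra. }
      replace (2*m+2+1)%nat with (2*m+1+2)%nat by lia. rewrite E. field. lra.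
Qed.

Lemma wallis_upper m : 2 * prodr 1 m ^ 2 <= PI * (2 * INR m + 1).
Proof.
  destruct (Iw_closed m) as [A B]. pose proof (Iw_decr (2*m)) as D.
  replace (S (2*m)) with (2*m+1)%nat in D by lia.
  pose proof (prodr_pos 1 m (le_n 1)) as P.
  rewrite plus_INR, mult_INR in B. replace (INR 2) with 2 in B by (simpl; lra). replace (INR 1) with 1 in B by (simpl; lra).
  assert (0 <= INR m) by apply pos_INR.
  assert (E1 : Iw (2*m+1) = prodr 1 m / (2*INR m+1)) by (rewrite <- B; field; lra).
  assert (E2 : Iw (2*m) = PI/2 / prodr 1 m) by (rewrite <- A; field; lra).
  rewrite E1, E2 in D.
  apply (Rmult_le_compat_r (2 * INR m + 1 )) in D; [|lra].
  apply (Rmult_le_compat_r (2 * prodr 1 m)) in D; [|lra].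
  replace (prodr 1 m / (2 * INR m + 1) * (2 * INR m + 1) * (2 * prodr 1 m)) with (2 * prodr 1 m ^ 2) in D by (field; lra).
  replace (PI / 2 / prodr 1 m * (2 * INR m + 1) * (2 * prodr 1 m)) with (PI * (2 * INR m + 1)) in D by (field; lra).
  exact D.
Qed.

Lemma wallis_lower m : PI * INR m <= prodr 1 m ^ 2.
Proof.
  destruct m as [|m]. simpl. lra.
  destruct (Iw_closed m) as [A B]. destruct (Iw_closed (S m)) as [A' B'].
  pose proof (Iw_decr (2*m+1)) as D.
  replace (S (2*m+1)) with (2*S m)%nat in D by lia.
  pose proof (prodr_pos 1 m (le_n 1)) as P. pose proof (prodr_pos 1 (S m) (le_n 1)) as P'.
  rewrite prodr_S in *. 
  rewrite !plus_INR, !mult_INR in *. replace (INR 2) with 2 in * by (simpl; lra). replace (INR 1) with 1 in * by (simpl; lra).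
  rewrite S_INR.
  assert (0 <= INR m) by apply pos_INR.
  assert (E1 : Iw (2*m+1) = prodr 1 m / (2*INR m+1)) by (rewrite <- B; field; lra).
  assert (E2 : Iw (2*S m) = PI/2 / (prodr 1 m * (2 * (1 + INR m)) / (2 * (1 + INR m) - 1))).
  { rewrite <- A'. field. split; lra. }
  rewrite E1, E2 in D.
  set (p := prodr 1 m) in *.
  assert (D' : PI/2 * (2*INR m+1) <= p * p * (2*(1+INR m)) / (2*(1+INR m)-1)).
  { apply (Rmult_le_compat_r ((2*INR m+1) * p * (2 * (1 + INR m)) / (2 * (1 + INR m) - 1))) in D.
    2:{ apply Rlt_le. unfold Rdiv. repeat apply Rmult_lt_0_compat; try lra. apply Rinv_0_lt_compat; lra. }
    replace (PI / 2 / (p * (2 * (1 + INR m)) / (2 * (1 + INR m) - 1)) *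
        ((2 * INR m + 1) * p * (2 * (1 + INR m)) / (2 * (1 + INR m) - 1))) with (PI/2 * (2*INR m+1)) in D by (field; split; lra).
    replace (p / (2 * INR m + 1) * ((2 * INR m + 1) * p * (2 * (1 + INR m)) / (2 * (1 + INR m) - 1)))
      with (p * p * (2*(1+INR m)) / (2*(1+INR m)-1)) in D by (field; lra).
    exact D. }
  replace ((p * (2 * (1 + INR m)) / (2 * (1 + INR m) - 1))^2) with
     (p * p * (2*(1+INR m)) / (2*(1+INR m)-1) * (2*(1+INR m)/ (2*(1+INR m)-1))) by (field; lra).
  apply Rle_trans with (PI/2 * (2*INR m+1) * (2*(1+INR m)/ (2*(1+INR m)-1))).
  - right. field. lra.
  - apply Rmult_le_compat_r. apply Rlt_le. unfold Rdiv. apply Rmult_lt_0_compat. lra. apply Rinv_0_lt_compat; lra. exact D'.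
Qed.
Definition sumL {A} (l : list A) (g : A -> R) : R := fold_right Rplus 0 (map g l).

Lemma sumL_app {A} (l1 l2 : list A) g : sumL (l1 ++ l2) g = sumL l1 g + sumL l2 g.
Proof. unfold sumL. induction l1; simpl. ring. rewrite IHl1. ring. Qed.

Lemma sumL_flat_map {A B} (l : list A) (F : A -> list B) g :
  sumL (flat_map F l) g = sumL l (fun x => sumL (F x) g).
Proof. induction l; simpl. reflexivity. rewrite sumL_app, IHl. unfold sumL; simpl. reflexivity. Qed.

Lemma sumL_map {A B} (l : list A) (F : A -> B) g : sumL (map F l) g = sumL l (fun x => g (F x)).
Proof. unfold sumL. rewrite map_map. reflexivity. Qed.

Lemma sumL_ext {A} (l : list A) g k : (forall x, In x l -> g x = k x) -> sumL l g = sumL l k.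
Proof.
  unfold sumL. induction l; simpl; intros H. reflexivity.
  rewrite H by auto. rewrite IHl by auto. reflexivity.
Qed.

Lemma sumL_plus {A} (l : list A) g k : sumL l (fun x => g x + k x) = sumL l g + sumL l k.
Proof. unfold sumL. induction l; simpl. ring. rewrite IHl. ring. Qed.

Lemma sumL_scal {A} (l : list A) c g : sumL l (fun x => c * g x) = c * sumL l g.
Proof. unfold sumL. induction l; simpl. ring. rewrite IHl. ring. Qed.

Lemma sumL_const_seq a n c : sumL (seq a n) (fun _ => c) = INR n * c.
Proof. revert a; induction n; intros a; simpl. unfold sumL; simpl; ring.
  unfold sumL in *; simpl. rewrite IHn. destruct n; simpl; ring. Qed.

Lemma sumL_zero {A} (l : list A) g : (forall x, In x l -> g x = 0) -> sumL l g = 0.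
Proof. intros H. rewrite (sumL_ext l g (fun _ => 0)) by auto. clear H. unfold sumL. induction l; simpl; auto. rewrite IHl; ring. Qed.

Lemma sumL_delta a n x c : (a <= x < a + n)%nat ->
  sumL (seq a n) (fun i => if Nat.eq_dec i x then c else 0) = c.
Proof.
  revert a; induction n; intros a H. lia.
  change (seq a (S n)) with (a :: seq (S a) n).
  change (sumL (a :: seq (S a) n) (fun i => if Nat.eq_dec i x then c else 0)) with
    ((if Nat.eq_dec a x then c else 0) + sumL (seq (S a) n) (fun i => if Nat.eq_dec i x then c else 0)).
  destruct (Nat.eq_dec a x).
  - subst. rewrite sumL_zero. ring. intros y Hy. apply in_seq in Hy. destruct (Nat.eq_dec y x); [lia|auto].
  - rewrite IHn by lia. ring.
Qed.

Lemma hist_SS m : hist (S (S m)) = flat_map (fun h => map (fun i => h ++ [i]) (seq 1 (S m))) (hist (S m)).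
Proof. reflexivity. Qed.

Lemma hist_prop m h : (1 <= m)%nat -> In h (hist m) ->
  length h = (m-1)%nat /\ (forall x, In x h -> (1 <= x <= m-1)%nat).
Proof.
  intros Hm. destruct m as [|m]. lia. clear Hm. revert h. induction m; intros h Hh.
  - simpl in Hh. destruct Hh as [<-|[]]. simpl. split; auto. intros x [].
  - rewrite hist_SS in Hh. apply in_flat_map in Hh. destruct Hh as [h0 [H0 Hi]].
    apply in_map_iff in Hi. destruct Hi as [i [<- Hi]]. apply in_seq in Hi.
    destruct (IHm h0 H0) as [L A]. split.
    + rewrite length_app. simpl. lia.
    + intros x Hx. apply in_app_or in Hx. destruct Hx as [Hx|[<-|[]]].
      specialize (A x Hx). lia. lia.
Qed.

Lemma weight_snoc h i : weight (h ++ [i]) =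
  weight h * (INR (children i h) + 1) / (2 * INR (length h + 2) - 3).
Proof.
  unfold weight. rewrite rev_app_distr. simpl. unfold children. rewrite count_occ_rev, length_rev. reflexivity.
Qed.

Lemma sum_count h m : (forall x, In x h -> (1 <= x <= m)%nat) ->
  sumL (seq 1 m) (fun i => INR (children i h)) = INR (length h).
Proof.
  induction h as [|x h IH]; intros H.
  - apply sumL_zero. intros; reflexivity.
  - transitivity (sumL (seq 1 m) (fun i => (if Nat.eq_dec i x then 1 else 0) + INR (children i h))).
    + apply sumL_ext. intros i _. unfold children. simpl. destruct (Nat.eq_dec x i), (Nat.eq_dec i x); try lia.
      rewrite S_INR; ring. ring.
    + rewrite sumL_plus, sumL_delta, IH. simpl length. rewrite S_INR. ring.
      intros; apply H; simpl; auto. specialize (H x (or_introl eq_refl)). lia.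
Qed.

Lemma children_snoc j h i : INR (children j (h ++ [i])) = INR (children j h) + (if Nat.eq_dec i j then 1 else 0).
Proof.
  unfold children. rewrite count_occ_app, plus_INR. simpl. destruct (Nat.eq_dec i j); simpl; ring.
Qed.

Lemma Expect_step m j (g : R -> R) : (1 <= j <= m)%nat ->
  Expect (S m) (fun h => g (INR (children j h))) =
  Expect m (fun h => g (INR (children j h)) + (INR (children j h) + 1) / (2 * INR m - 1) *
                       (g (INR (children j h) + 1) - g (INR (children j h)))).
Proof.
  intros Hj. destruct m as [|m]. lia.
  unfold Expect. rewrite hist_SS. fold (sumL (flat_map (fun h => map (fun i => h ++ [i]) (seq 1 (S m))) (hist (S m)))
           (fun h => weight h * g (INR (children j h)))).
  fold (sumL (hist (S m)) (fun h => weight h * (g (INR (children j h)) + (INR (children j h) + 1) / (2 * INR (S m) - 1) *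
                       (g (INR (children j h) + 1) - g (INR (children j h)))))).
  rewrite sumL_flat_map. apply sumL_ext. intros h Hh.
  destruct (hist_prop (S m) h ltac:(lia) Hh) as [L A].
  rewrite sumL_map.
  set (c := INR (children j h)).
  set (K := weight h / (2 * INR (S m) - 1)).
  assert (HS : 1 <= INR (S m)) by (apply (le_INR 1); lia).
  transitivity (sumL (seq 1 (S m)) (fun i => (K * g c) * (INR (children i h) + 1) +
                    (if Nat.eq_dec i j then K * (c + 1) * (g (c+1) - g c) else 0))).
  - apply sumL_ext. intros i Hi. rewrite weight_snoc, children_snoc. fold c.
    rewrite L. replace (INR (S m - 1 + 2)) with (INR (S m) + 1) by (rewrite plus_INR; replace (S m - 1)%nat with m by lia; rewrite S_INR; simpl; ring).
    unfold K. destruct (Nat.eq_dec i j).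
    + subst i. fold c. replace (c + 1) with (c+1) by ring. field. lra.
    + rewrite Rplus_0_r. field. lra.
  - rewrite sumL_plus, sumL_scal, sumL_delta by lia. rewrite sumL_plus, sum_count, sumL_const_seq.
    2:{ intros x Hx. specialize (A x Hx). lia. }
    rewrite L. unfold K. replace (INR (S m - 1)) with (INR (S m) - 1) by (replace (S m - 1)%nat with m by lia; rewrite S_INR; ring).
    field. lra.
Qed.

Lemma Expect_ext n f g : (forall h, In h (hist n) -> f h = g h) -> Expect n f = Expect n g.
Proof. intros H. unfold Expect. fold (sumL (hist n) (fun h => weight h * f h)). fold (sumL (hist n) (fun h => weight h * g h)).
  apply sumL_ext. intros h Hh. rewrite H; auto. Qed.

Lemma Expect_plus n f g : Expect n (fun h => f h + g h) = Expect n f + Expect n g.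
Proof. unfold Expect. fold (sumL (hist n) (fun h => weight h * (f h + g h))).
  fold (sumL (hist n) (fun h => weight h * f h)). fold (sumL (hist n) (fun h => weight h * g h)).
  rewrite <- sumL_plus. apply sumL_ext. intros; ring. Qed.

Lemma Expect_scal n c f : Expect n (fun h => c * f h) = c * Expect n f.
Proof. unfold Expect. fold (sumL (hist n) (fun h => weight h * (c * f h))).
  fold (sumL (hist n) (fun h => weight h * f h)).
  rewrite <- sumL_scal. apply sumL_ext. intros; ring. Qed.

Lemma Expect_one n : (1 <= n)%nat -> Expect n (fun _ => 1) = 1.
Proof.
  intros Hn. induction n as [|m IH]. lia.
  destruct m as [|m]. unfold Expect. simpl. unfold weight. simpl. ring.
  pose proof (Expect_step (S m) 1 (fun _ => 1) ltac:(lia)) as E. cbv beta in E. rewrite E.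
  transitivity (Expect (S m) (fun _ => 1)). apply Expect_ext; intros; ring. apply IH; lia.
Qed.

Lemma Expect_const n c : (1 <= n)%nat -> Expect n (fun _ => c) = c.
Proof. intros Hn. transitivity (Expect n (fun _ => c * 1)). apply Expect_ext; intros; ring.
  rewrite Expect_scal, Expect_one by auto. ring. Qed.

Lemma Expect_base j (g : R -> R) : (1 <= j)%nat -> Expect j (fun h => g (INR (children j h))) = g 0.
Proof.
  intros Hj. transitivity (Expect j (fun _ => g 0)). 2: apply Expect_const; auto. apply Expect_ext. intros h Hh.
  destruct (hist_prop j h Hj Hh) as [_ A]. unfold children.
  rewrite (proj1 (count_occ_not_In Nat.eq_dec h j)). reflexivity.
  intros Hin. specialize (A j Hin). lia.
Qed.

Definition EA n j := Expect n (fun h => INR (children j h) + 1).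
Definition EQ n j := Expect n (fun h => (INR (children j h) + 1) * (INR (children j h) + 2)).

Lemma EA_closed j d : (1 <= j)%nat -> EA (j + d) j = prodr j d.
Proof.
  intros Hj. induction d.
  - unfold EA. rewrite Nat.add_0_r. rewrite (Expect_base j (fun x => x + 1)) by auto. simpl. ring.
  - unfold EA in *. replace (j + S d)%nat with (S (j+d)) by lia.
    rewrite (Expect_step (j+d) j (fun x => x + 1)) by lia. rewrite prodr_S, <- IHd.
    assert (1 <= INR (j+d)) by (apply (le_INR 1); lia).
    transitivity ((2 * INR (j + d)) / (2 * INR (j + d) - 1) * Expect (j + d) (fun h : list nat => INR (children j h) + 1)).
    + rewrite <- Expect_scal. apply Expect_ext. intros h _. field. lra.
    + field. lra.
Qed.

Lemma EQ_closed j d : (1 <= j)%nat -> EQ (j + d) j = 2 * (2 * INR (j+d) - 1) / (2 * INR j - 1).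
Proof.
  intros Hj. assert (1 <= INR j) by (apply (le_INR 1); lia). induction d.
  - unfold EQ. rewrite Nat.add_0_r. rewrite (Expect_base j (fun x => (x + 1) * (x+2))) by auto. field. lra.
  - unfold EQ in *. replace (j + S d)%nat with (S (j+d)) by lia.
    rewrite (Expect_step (j+d) j (fun x => (x + 1)*(x+2))) by lia.
    assert (1 <= INR (j+d)) by (apply (le_INR 1); lia).
    transitivity ((2 * INR (j+d) + 1)/(2 * INR (j+d) - 1) *
       Expect (j + d) (fun h : list nat => (INR (children j h) + 1) * (INR (children j h) + 2))).
    + rewrite <- Expect_scal. apply Expect_ext. intros h _. field. lra.
    + rewrite IHd. rewrite S_INR. field. lra.
Qed.

Definition dlt (j : nat) : R := if Nat.leb 2 j then 1 else 0.

Lemma INR_deg j h : INR (deg j h) = INR (children j h) + dlt j.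
Proof. unfold deg, dlt. rewrite plus_INR. destruct (Nat.leb 2 j); simpl; ring. Qed.

Lemma ED_EA n j : (1 <= n)%nat -> ED n j = EA n j + (dlt j - 1).
Proof.
  intros Hn. unfold ED, EA. transitivity (Expect n (fun h => (INR (children j h) + 1) + (dlt j - 1))).
  apply Expect_ext. intros h _. rewrite INR_deg. ring.
  rewrite Expect_plus, Expect_const by auto. reflexivity.
Qed.

Lemma VarD_EQ n j : (1 <= n)%nat -> VarD n j = EQ n j - EA n j - EA n j ^ 2.
Proof.
  intros Hn. unfold VarD. rewrite ED_EA by auto.
  assert (E : Expect n (fun h => INR (deg j h) ^ 2) = EQ n j + (2 * dlt j - 3) * EA n j + (dlt j - 1)^2).
  { unfold EQ, EA. transitivity (Expect n (fun h => (INR (children j h) + 1) * (INR (children j h) + 2)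
       + (2 * dlt j - 3) * (INR (children j h) + 1) + (dlt j - 1)^2)).
    apply Expect_ext. intros h _. rewrite INR_deg. ring.
    rewrite Expect_plus, Expect_plus, Expect_scal, Expect_const by auto. reflexivity. }
  rewrite E. ring.
Qed.

Definition Pj (j n : nat) : R := prodr j (n - j).

Lemma ED_closed n j : (1 <= j <= n)%nat -> ED n j = Pj j n + (dlt j - 1).
Proof. intros H. rewrite ED_EA by lia. unfold Pj. rewrite <- EA_closed by lia. f_equal. f_equal. lia. Qed.

Lemma VarD_closed n j : (1 <= j <= n)%nat ->
  VarD n j = 2 * (2 * INR n - 1) / (2 * INR j - 1) - Pj j n - Pj j n ^ 2.
Proof.
  intros H. rewrite VarD_EQ by lia. unfold Pj. rewrite <- EA_closed by lia.
  replace (j + (n - j))%nat with n by lia. pose proof (EQ_closed j (n-j)) as E.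
  replace (j + (n - j))%nat with n in E by lia. rewrite E by lia. reflexivity.
Qed.

Lemma prodr_split a d e : prodr a (d + e) = prodr a d * prodr (a + d) e.
Proof.
  induction e. rewrite Nat.add_0_r. simpl. ring.
  replace (d + S e)%nat with (S (d + e)) by lia. rewrite !prodr_S, IHe.
  replace (a + (d + e))%nat with (a + d + e)%nat by lia. field.
  assert (1 <= INR (a+d+e) \/ INR (a+d+e) = 0).
  { destruct (a+d+e)%nat. right; reflexivity. left. apply (le_INR 1); lia. }
  destruct H; [lra|]. rewrite H. lra.
Qed.

Lemma prodr_lower j d : (1 <= j)%nat -> (2 * INR (j + d) - 1) / (2 * INR j - 1) <= prodr j d ^ 2.
Proof.
  intros Hj. assert (1 <= INR j) by (apply (le_INR 1); lia).
  induction d.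
  - rewrite Nat.add_0_r. simpl. right. field. lra.
  - rewrite prodr_S. replace (j + S d)%nat with (S (j + d)) by lia. rewrite S_INR.
    assert (1 <= INR (j+d)) by (apply (le_INR 1); lia).
    set (x := INR (j+d)) in *. set (p := prodr j d) in *.
    replace ((p * (2 * x) / (2 * x - 1)) ^ 2) with (p^2 * ((2*x)^2/(2*x-1)^2)) by (field; lra).
    assert (F : (2*x)^2/(2*x-1)^2 = (2*x+1)/(2*x-1) + /(2*x-1)^2) by (field; lra).
    assert (G : 0 < /(2*x-1)^2) by (apply Rinv_0_lt_compat; nra).
    assert (G2 : 0 < (2*x+1)/(2*x-1)) by (unfold Rdiv; apply Rmult_lt_0_compat; [lra|apply Rinv_0_lt_compat; lra]).
    assert (G3 : 0 <= p^2) by nra.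
    rewrite F. apply Rle_trans with (p^2 * ((2*x+1)/(2*x-1))).
    + apply Rle_trans with ((2 * x - 1) / (2 * INR j - 1) * ((2*x+1)/(2*x-1))).
      * right. field. lra.
      * apply Rmult_le_compat_r; lra.
    + nra.
Qed.

Lemma prodr_upper j d : (2 <= j)%nat -> prodr j d ^ 2 <= (INR (j + d) - 1) / (INR j - 1).
Proof.
  intros Hj. assert (2 <= INR j) by (apply (le_INR 2); lia).
  induction d.
  - rewrite Nat.add_0_r. simpl. right. field. lra.
  - rewrite prodr_S. replace (j + S d)%nat with (S (j + d)) by lia. rewrite S_INR.
    assert (2 <= INR (j+d)) by (apply (le_INR 2); lia).
    set (x := INR (j+d)) in *. set (p := prodr j d) in *.
    replace ((p * (2 * x) / (2 * x - 1)) ^ 2) with (p^2 * ((2*x)^2/(2*x-1)^2)) by (field; lra).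
    assert (F : (2*x)^2/(2*x-1)^2 = x/(x-1) - x/((x-1)*(2*x-1)^2)) by (field; lra).
    assert (G : 0 < x/((x-1)*(2*x-1)^2)).
    { unfold Rdiv; apply Rmult_lt_0_compat; [lra|apply Rinv_0_lt_compat]. apply Rmult_lt_0_compat; nra. }
    assert (G2 : 0 < (2*x)^2/(2*x-1)^2) by (unfold Rdiv; apply Rmult_lt_0_compat; [nra|apply Rinv_0_lt_compat; nra]).
    apply Rle_trans with ((x - 1) / (INR j - 1) * ((2*x)^2/(2*x-1)^2)).
    + apply Rmult_le_compat_r; lra.
    + apply Rle_trans with ((x - 1) / (INR j - 1) * (x/(x-1))).
      * apply Rmult_le_compat_l. apply Rlt_le. unfold Rdiv; apply Rmult_lt_0_compat; [lra|apply Rinv_0_lt_compat; lra]. lra.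
      * right. field. lra.
Qed.

Lemma gamma_prodr k : prodr 1 k * gamma_half k = sqrt PI * INR (Factorial.fact k).
Proof.
  induction k. simpl. ring.
  rewrite prodr_S. simpl gamma_half. rewrite fact_simpl, mult_INR.
  replace (1 + k)%nat with (S k) by lia. rewrite S_INR.
  assert (0 <= INR k) by apply pos_INR.
  transitivity ((prodr 1 k * gamma_half k) * (INR k + 1)). field. lra.
  rewrite IHk. ring.
Qed.

Lemma gratio_eq j : (1 <= j)%nat -> gratio j = sqrt PI / prodr 1 (j - 1).
Proof.
  intros Hj. unfold gratio, gamma_nat. pose proof (gamma_prodr (j-1)) as E.
  pose proof (prodr_pos 1 (j-1) (le_n 1)).
  assert (0 < INR (Factorial.fact (j-1))) by (apply lt_0_INR, Factorial.lt_O_fact).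
  apply (Rmult_eq_reg_r (INR (Factorial.fact (j-1)) * prodr 1 (j-1))). 2: nra.
  transitivity (prodr 1 (j-1) * gamma_half (j-1)). field. lra.
  rewrite E. field. lra.
Qed.

Lemma Pj_bounds j n : (2 <= j <= n)%nat ->
  INR n / INR j <= Pj j n ^ 2 <= INR n / (INR j - 1).
Proof.
  intros H. unfold Pj. pose proof (prodr_lower j (n-j) ltac:(lia)) as L. pose proof (prodr_upper j (n-j) ltac:(lia)) as U.
  replace (j + (n-j))%nat with n in * by lia.
  assert (2 <= INR j) by (apply (le_INR 2); lia). assert (INR j <= INR n) by (apply le_INR; lia).
  split.
  - eapply Rle_trans; [|exact L]. apply Rmult_le_reg_r with (INR j * (2 * INR j - 1)). nra.
    replace (INR n / INR j * (INR j * (2 * INR j - 1))) with (INR n * (2 * INR j - 1)) by (field; lra).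
    replace ((2 * INR n - 1) / (2 * INR j - 1) * (INR j * (2 * INR j - 1))) with ((2 * INR n - 1) * INR j) by (field; lra).
    nra.
  - eapply Rle_trans; [exact U|]. unfold Rdiv. apply Rmult_le_compat_r. left; apply Rinv_0_lt_compat; lra. lra.
Qed.

Lemma lim_inv_inf (u : nat -> R) : is_lim_seq u p_infty -> is_lim_seq (fun n => / u n) 0.
Proof. intros H. apply (is_lim_seq_inv u p_infty H). discriminate. Qed.

Lemma lim_invn : is_lim_seq (fun n => / INR n) 0.
Proof. apply lim_inv_inf, is_lim_seq_INR. Qed.

Lemma lim_sqrt (u : nat -> R) l : 0 <= l -> is_lim_seq u l -> is_lim_seq (fun n => sqrt (u n)) (sqrt l).
Proof. intros Hl H. apply is_lim_seq_continuous; auto. apply continuity_pt_sqrt; auto. Qed.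

Lemma lim_inv_sqrtn : is_lim_seq (fun n => / sqrt (INR n)) 0.
Proof.
  replace (Finite 0) with (Finite (sqrt 0)) by (rewrite sqrt_0; reflexivity).
  apply (is_lim_seq_ext (fun n => sqrt (/ INR n))). intros n. apply sqrt_inv.
  apply lim_sqrt. lra. apply lim_invn.
Qed.

Lemma nat_to_infty_inv jf : nat_to_infty jf -> is_lim_seq (fun n => / INR (jf n)) 0.
Proof.
  intros H. apply lim_inv_inf. apply is_lim_seq_spec. intros M.
  destruct (H (Z.to_nat (up M))) as [N HN]. exists N. intros n Hn. specialize (HN n Hn).
  apply le_INR in HN. destruct (archimed M) as [A _].
  destruct (Z_lt_le_dec (up M) 0) as [Z|Z].
  - assert (IZR (up M) < 0) by (apply IZR_lt; lia). pose proof (pos_INR (jf n)). lra.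
  - rewrite INR_IZR_INZ, Z2Nat.id in HN by lia. lra.
Qed.

Lemma Pj_ratio (jf : nat -> nat) :
  is_lim_seq (fun n => / INR (jf n)) 0 ->
  eventually (fun n => (2 <= jf n <= n)%nat) ->
  is_lim_seq (fun n => Pj (jf n) n ^ 2 * INR (jf n) / INR n) 1.
Proof.
  intros Hj Hev.
  apply is_lim_seq_le_le_loc with (u := fun _ => 1) (w := fun n => / (1 - / INR (jf n))).
  - destruct Hev as [N HN]. exists N. intros n Hn. specialize (HN n Hn).
    destruct (Pj_bounds (jf n) n HN) as [L U].
    assert (2 <= INR (jf n)) by (apply (le_INR 2); lia). assert (INR (jf n) <= INR n) by (apply le_INR; lia).
    split.
    + apply Rmult_le_reg_r with (INR n / INR (jf n)). unfold Rdiv; apply Rmult_lt_0_compat; [lra|apply Rinv_0_lt_compat; lra].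
      replace (Pj (jf n) n ^ 2 * INR (jf n) / INR n * (INR n / INR (jf n))) with (Pj (jf n) n ^ 2) by (field; lra). lra.
    + replace (/ (1 - / INR (jf n))) with (INR n / (INR (jf n) - 1) * (INR (jf n) / INR n)) by (field; lra).
      replace (Pj (jf n) n ^ 2 * INR (jf n) / INR n) with (Pj (jf n) n ^ 2 * (INR (jf n) / INR n)) by (unfold Rdiv; ring).
      apply Rmult_le_compat_r. apply Rlt_le. unfold Rdiv. apply Rmult_lt_0_compat. lra. apply Rinv_0_lt_compat; lra.
      exact U.
  - apply is_lim_seq_const.
  - replace (Finite 1) with (Rbar_inv (Finite (1 - 0))) by (simpl; f_equal; field).
    apply is_lim_seq_inv. apply is_lim_seq_minus'. apply is_lim_seq_const. exact Hj.
    simpl. intro E. injection E. lra.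
Qed.

Lemma dlt_2 j : (2 <= j)%nat -> dlt j = 1.
Proof. intros H. unfold dlt. replace (Nat.leb 2 j) with true. reflexivity. symmetry. apply Nat.leb_le. lia. Qed.

Lemma inv_ev2 (jf : nat -> nat) : (forall n, (1 <= n)%nat -> (1 <= jf n)%nat) ->
  is_lim_seq (fun n => / INR (jf n)) 0 -> eventually (fun n => (2 <= jf n)%nat).
Proof.
  intros H1 H. apply is_lim_seq_spec in H. destruct (H (mkposreal (1/2) ltac:(lra))) as [N HN].
  exists (max N 1). intros n Hn. specialize (HN n ltac:(lia)). specialize (H1 n ltac:(lia)). simpl in HN.
  destruct (jf n) as [|[|k]] eqn:E. 
  - lia.
  - simpl in HN. rewrite Rinv_1, Rminus_0_r, Rabs_R1 in HN. lra.
  - lia.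
Qed.

Lemma Pj_pos j n : (1 <= j)%nat -> 0 < Pj j n.
Proof. intros; unfold Pj; apply prodr_pos; auto. Qed.

Lemma part2 (jf : nat -> nat) :
  (forall n, (1 <= n)%nat -> (1 <= jf n <= n)%nat) -> nat_to_infty jf ->
  asym (fun n => ED n (jf n)) (fun n => sqrt (INR n / INR (jf n))).
Proof.
  intros Hb Hinf. unfold asym. apply is_lim_seq_Reals.
  pose proof (nat_to_infty_inv jf Hinf) as Hi.
  destruct (inv_ev2 jf (fun n Hn => proj1 (Hb n Hn)) Hi) as [N HN].
  assert (Hev : eventually (fun n => (2 <= jf n <= n)%nat)).
  { exists (max N 1). intros n Hn. specialize (HN n ltac:(lia)). specialize (Hb n ltac:(lia)). lia. }
  pose proof (Pj_ratio jf Hi Hev) as X.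
  apply is_lim_seq_ext_loc with (u := fun n => sqrt (Pj (jf n) n ^ 2 * INR (jf n) / INR n)).
  - destruct Hev as [M HM]. exists M. intros n Hn. specialize (HM n Hn).
    rewrite ED_closed by lia. rewrite dlt_2 by lia. rewrite Rminus_diag, Rplus_0_r.
    assert (2 <= INR (jf n)) by (apply (le_INR 2); lia). assert (INR (jf n) <= INR n) by (apply le_INR; lia).
    pose proof (Pj_pos (jf n) n ltac:(lia)).
    replace (Pj (jf n) n ^ 2 * INR (jf n) / INR n) with (Pj (jf n) n ^ 2 / (INR n / INR (jf n))) by (field; lra).
    rewrite sqrt_div_alt. rewrite sqrt_pow2 by lra. reflexivity.
    unfold Rdiv. apply Rmult_lt_0_compat. lra. apply Rinv_0_lt_compat; lra.
  - replace (Finite 1) with (Finite (sqrt 1)) by (rewrite sqrt_1; reflexivity).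
    apply lim_sqrt. lra. exact X.
Qed.

Lemma part3 (jf : nat -> nat) :
  (forall n, (1 <= jf n)%nat) -> nat_to_infty jf ->
  Un_cv (fun n => INR (jf n) / INR n) 0 ->
  asym (fun n => VarD n (jf n)) (fun n => INR n / INR (jf n)).
Proof.
  intros H1 Hinf Hr. unfold asym. apply is_lim_seq_Reals. apply is_lim_seq_Reals in Hr.
  pose proof (nat_to_infty_inv jf Hinf) as Hi.
  destruct (inv_ev2 jf (fun n _ => H1 n) Hi) as [N HN].
  pose proof Hr as Hr'. apply is_lim_seq_spec in Hr'. destruct (Hr' (mkposreal (1/2) ltac:(lra))) as [N2 HN2].
  assert (Hev : eventually (fun n => (2 <= jf n <= n)%nat)).
  { exists (max (max N N2) 1). intros n Hn. specialize (HN n ltac:(lia)). specialize (HN2 n ltac:(lia)).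
    simpl in HN2. rewrite Rminus_0_r in HN2. split; auto.
    assert (1 <= INR n) by (apply (le_INR 1); lia).
    assert (INR (jf n) < INR n).
    { apply Rmult_lt_reg_r with (/ INR n). apply Rinv_0_lt_compat; lra. rewrite Rinv_r by lra.
      pose proof (Rle_abs (INR (jf n) / INR n)). unfold Rdiv in *. lra. }
    apply INR_lt in H0. lia. }
  pose proof (Pj_ratio jf Hi Hev) as X.
  apply is_lim_seq_ext_loc with (u := fun n => 2 * (2 - / INR n) / (2 - / INR (jf n))
       - sqrt (Pj (jf n) n ^ 2 * INR (jf n) / INR n) * sqrt (INR (jf n) / INR n)
       - Pj (jf n) n ^ 2 * INR (jf n) / INR n).
  - destruct Hev as [M HM]. exists M. intros n Hn. specialize (HM n Hn).
    rewrite VarD_closed by lia.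
    assert (2 <= INR (jf n)) by (apply (le_INR 2); lia). assert (INR (jf n) <= INR n) by (apply le_INR; lia).
    pose proof (Pj_pos (jf n) n ltac:(lia)).
    rewrite <- sqrt_mult_alt.
    2:{ apply Rmult_le_pos. apply Rmult_le_pos. nra. lra. left; apply Rinv_0_lt_compat; lra. }
    replace (Pj (jf n) n ^ 2 * INR (jf n) / INR n * (INR (jf n) / INR n)) with ((Pj (jf n) n * INR (jf n) / INR n)^2) by (field; lra).
    rewrite sqrt_pow2.
    2:{ unfold Rdiv. apply Rmult_le_pos. apply Rmult_le_pos; lra. left; apply Rinv_0_lt_compat; lra. }
    field. lra.
  - replace (Finite 1) with (Finite (2 * (2 - 0) / (2 - 0) - sqrt 1 * sqrt 0 - 1)).
    2:{ rewrite sqrt_0. f_equal. field. }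
    apply is_lim_seq_minus'. apply is_lim_seq_minus'.
    + apply is_lim_seq_div'. apply is_lim_seq_mult'. apply is_lim_seq_const. apply is_lim_seq_minus'. apply is_lim_seq_const. apply lim_invn.
      apply is_lim_seq_minus'. apply is_lim_seq_const. exact Hi. lra.
    + apply is_lim_seq_mult'. apply lim_sqrt. lra. exact X. apply lim_sqrt. lra. exact Hr.
    + exact X.
Qed.

Lemma part4 (jf : nat -> nat) (theta : R) :
  0 < theta < 1 -> (forall n, (1 <= jf n)%nat) ->
  Un_cv (fun n => INR (jf n) / INR n) theta ->
  Un_cv (fun n => VarD n (jf n)) (1 / theta - 1 / sqrt theta).
Proof.
  intros Ht H1 Hr. apply is_lim_seq_Reals. apply is_lim_seq_Reals in Hr.
  assert (Hi : is_lim_seq (fun n => / INR (jf n)) 0).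
  { apply is_lim_seq_ext_loc with (u := fun n => / INR n / (INR (jf n) / INR n)).
    - exists 1%nat. intros n Hn. assert (1 <= INR n) by (apply (le_INR 1); lia).
      assert (1 <= INR (jf n)) by (apply (le_INR 1); apply H1). field. lra.
    - replace (Finite 0) with (Finite (0 / theta)) by (f_equal; field; lra).
      apply is_lim_seq_div'. apply lim_invn. exact Hr. lra. }
  destruct (inv_ev2 jf (fun n _ => H1 n) Hi) as [N HN].
  pose proof Hr as Hr'. apply is_lim_seq_spec in Hr'. destruct (Hr' (mkposreal ((1 - theta)/2) ltac:(lra))) as [N2 HN2].
  assert (Hev : eventually (fun n => (2 <= jf n <= n)%nat)).
  { exists (max (max N N2) 1). intros n Hn. specialize (HN n ltac:(lia)). specialize (HN2 n ltac:(lia)).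
    simpl in HN2. split; auto.
    assert (1 <= INR n) by (apply (le_INR 1); lia).
    assert (INR (jf n) < INR n).
    { apply Rmult_lt_reg_r with (/ INR n). apply Rinv_0_lt_compat; lra. rewrite Rinv_r by lra.
      pose proof (Rle_abs (INR (jf n) / INR n - theta)). unfold Rdiv in *. lra. }
    apply INR_lt in H0. lia. }
  pose proof (Pj_ratio jf Hi Hev) as X.
  assert (Y : is_lim_seq (fun n => Pj (jf n) n ^ 2) (1 / theta)).
  { apply is_lim_seq_ext_loc with (u := fun n => (Pj (jf n) n ^ 2 * INR (jf n) / INR n) / (INR (jf n) / INR n)).
    - destruct Hev as [M HM]. exists M. intros n Hn. specialize (HM n Hn).
      assert (2 <= INR (jf n)) by (apply (le_INR 2); lia). assert (INR (jf n) <= INR n) by (apply le_INR; lia).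
      field. lra.
    - apply is_lim_seq_div'. exact X. exact Hr. lra. }
  apply is_lim_seq_ext_loc with (u := fun n => 2 * (2 - / INR n) / (2 * (INR (jf n) / INR n) - / INR n)
       - sqrt (Pj (jf n) n ^ 2) - Pj (jf n) n ^ 2).
  - destruct Hev as [M HM]. exists M. intros n Hn. specialize (HM n Hn).
    rewrite VarD_closed by lia.
    assert (2 <= INR (jf n)) by (apply (le_INR 2); lia). assert (INR (jf n) <= INR n) by (apply le_INR; lia).
    pose proof (Pj_pos (jf n) n ltac:(lia)).
    rewrite sqrt_pow2 by lra. field. lra.
  - replace (Finite (1 / theta - 1 / sqrt theta)) with (Finite (2 * (2 - 0) / (2 * theta - 0) - sqrt (1/theta) - 1/theta)).
    2:{ f_equal. rewrite sqrt_div_alt by lra. rewrite sqrt_1. assert (0 < sqrt theta) by (apply sqrt_lt_R0; lra). field. split; lra. }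
    apply is_lim_seq_minus'. apply is_lim_seq_minus'.
    + apply is_lim_seq_div'. apply is_lim_seq_mult'. apply is_lim_seq_const. apply is_lim_seq_minus'. apply is_lim_seq_const. apply lim_invn.
      apply is_lim_seq_minus'. apply is_lim_seq_mult'. apply is_lim_seq_const. exact Hr. apply lim_invn. lra.
    + apply lim_sqrt. unfold Rdiv. rewrite Rmult_1_l. left. apply Rinv_0_lt_compat. lra. exact Y.
    + exact Y.
Qed.

Lemma PI_lt_4 : PI < 4.
Proof.
  pose proof (wallis_lower 2) as L.
  assert (E : prodr 1 2 = 8/3) by (simpl; field).
  rewrite E in L. simpl INR in L. lra.
Qed.

Lemma wallis_lim : is_lim_seq (fun n => prodr 1 (n - 1) ^ 2 / INR n) PI.
Proof.
  apply is_lim_seq_le_le_loc with (u := fun n => PI * (1 - / INR n)) (w := fun n => PI * (1 - /2 * / INR n)).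
  - exists 1%nat. intros n Hn. assert (1 <= INR n) by (apply (le_INR 1); lia).
    pose proof (wallis_lower (n-1)) as L. pose proof (wallis_upper (n-1)) as U.
    rewrite minus_INR in L, U by lia. simpl INR in L, U. pose proof PI_RGT_0.
    split.
    + apply Rmult_le_reg_r with (INR n). lra.
      replace (PI * (1 - / INR n) * INR n) with (PI * (INR n - 1)) by (field; lra).
      replace (prodr 1 (n - 1) ^ 2 / INR n * INR n) with (prodr 1 (n - 1) ^ 2) by (field; lra). lra.
    + apply Rmult_le_reg_r with (2 * INR n). lra.
      replace (PI * (1 - / 2 * / INR n) * (2 * INR n)) with (PI * (2 * (INR n - 1) + 1)) by (field; lra).
      replace (prodr 1 (n - 1) ^ 2 / INR n * (2 * INR n)) with (2 * prodr 1 (n - 1) ^ 2) by (field; lra). lra.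
  - replace (Finite PI) with (Finite (PI * (1 - 0))) by (f_equal; ring).
    apply is_lim_seq_mult'. apply is_lim_seq_const. apply is_lim_seq_minus'. apply is_lim_seq_const. apply lim_invn.
  - replace (Finite PI) with (Finite (PI * (1 - /2 * 0))) by (f_equal; ring).
    apply is_lim_seq_mult'. apply is_lim_seq_const. apply is_lim_seq_minus'. apply is_lim_seq_const.
    apply is_lim_seq_mult'. apply is_lim_seq_const. apply lim_invn.
Qed.

Lemma Pj_W j n : (1 <= j <= n)%nat -> prodr 1 (n - 1) = prodr 1 (j - 1) * Pj j n.
Proof.
  intros H. unfold Pj. replace (n - 1)%nat with ((j - 1) + (n - j))%nat by lia.
  rewrite prodr_split. replace (1 + (j - 1))%nat with j by lia. reflexivity.
Qed.

Lemma part1 j : (1 <= j)%nat ->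
     asym (fun n => ED n j) (fun n => gratio j * sqrt (INR n)) /\
     asym (fun n => VarD n j) (fun n => (4 / (2 * INR j - 1) - gratio j ^ 2) * INR n).
Proof.
  intros Hj. rewrite gratio_eq by auto.
  assert (HW : 0 < prodr 1 (j - 1)) by (apply prodr_pos; lia).
  assert (HW1 : j = 1%nat -> prodr 1 (j - 1) = 1) by (intros ->; reflexivity).
  assert (HWL : PI * INR (j - 1) <= prodr 1 (j - 1) ^ 2) by apply wallis_lower.
  remember (prodr 1 (j - 1)) as W eqn:HWd.
  assert (HP : 0 < sqrt PI) by (apply sqrt_lt_R0, PI_RGT_0).
  assert (HJ : 1 <= INR j) by (apply (le_INR 1); lia).
  pose proof wallis_lim as Y.
  assert (Ev : eventually (fun n => (1 <= j <= n)%nat)).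
  { exists j. intros n Hn. lia. }
  split.
  - unfold asym. apply is_lim_seq_Reals.
    apply is_lim_seq_ext_loc with (u := fun n => sqrt (prodr 1 (n - 1) ^ 2 / INR n) / sqrt PI
                                              + (dlt j - 1) * W / sqrt PI * / sqrt (INR n)).
    + destruct Ev as [M HM]. exists M. intros n Hn. specialize (HM n Hn).
      assert (1 <= INR n) by (apply (le_INR 1); lia).
      assert (0 < sqrt (INR n)) by (apply sqrt_lt_R0; lra).
      rewrite ED_closed by lia. rewrite (Pj_W j n) by lia. rewrite <- HWd.
      rewrite sqrt_div_alt by lra. rewrite sqrt_pow2.
      2:{ apply Rlt_le, Rmult_lt_0_compat; auto. apply Pj_pos; lia. }
      field. repeat split; lra.
    + replace (Finite 1) with (Finite (sqrt PI / sqrt PI + (dlt j - 1) * W / sqrt PI * 0)) by (f_equal; field; lra).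
      apply is_lim_seq_plus'. apply is_lim_seq_div'. apply lim_sqrt. left; apply PI_RGT_0. exact Y.
      apply is_lim_seq_const. lra. apply is_lim_seq_mult'. apply is_lim_seq_const. apply lim_inv_sqrtn.
  - assert (Hc : PI / W ^ 2 < 4 / (2 * INR j - 1)).
    { destruct (Nat.eq_dec j 1) as [E|E].
      - rewrite HW1 by auto. subst j. simpl. pose proof PI_lt_4. lra.
      - pose proof HWL as L. rewrite minus_INR in L by lia. simpl INR in L.
        assert (2 <= INR j) by (apply (le_INR 2); lia).
        apply Rle_lt_trans with (/ (INR j - 1)).
        + apply Rmult_le_reg_r with (W^2 * (INR j - 1)). nra.
          replace (PI / W ^ 2 * (W ^ 2 * (INR j - 1))) with (PI * (INR j - 1)) by (field; lra).
          replace (/ (INR j - 1) * (W ^ 2 * (INR j - 1))) with (W^2) by (field; lra). lra.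
        + apply Rmult_lt_reg_r with ((INR j - 1) * (2 * INR j - 1)). nra.
          replace (/ (INR j - 1) * ((INR j - 1) * (2 * INR j - 1))) with (2 * INR j - 1) by (field; lra).
          replace (4 / (2 * INR j - 1) * ((INR j - 1) * (2 * INR j - 1))) with (4 * (INR j - 1)) by (field; lra). lra. }
    assert (Eg : (sqrt PI / W) ^ 2 = PI / W ^ 2).
    { replace ((sqrt PI / W) ^ 2) with ((sqrt PI * sqrt PI) / W ^ 2) by (field; lra).
      rewrite sqrt_sqrt. reflexivity. left; apply PI_RGT_0. }
    rewrite Eg. set (c := 4 / (2 * INR j - 1) - PI / W ^ 2).
    unfold asym. apply is_lim_seq_Reals.
    apply is_lim_seq_ext_loc with (u := fun n => (2 * (2 - / INR n) / (2 * INR j - 1)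
         - sqrt (prodr 1 (n - 1) ^ 2 / INR n) / W * / sqrt (INR n) - prodr 1 (n - 1) ^ 2 / INR n / W ^ 2) / c).
    + destruct Ev as [M HM]. exists M. intros n Hn. specialize (HM n Hn).
      assert (1 <= INR n) by (apply (le_INR 1); lia).
      assert (0 < sqrt (INR n)) by (apply sqrt_lt_R0; lra).
      assert (En : sqrt (INR n) * sqrt (INR n) = INR n) by (apply sqrt_sqrt; lra).
      rewrite VarD_closed by lia. rewrite (Pj_W j n) by lia. rewrite <- HWd.
      rewrite sqrt_div_alt by lra. rewrite sqrt_pow2.
      2:{ apply Rlt_le, Rmult_lt_0_compat; auto. apply Pj_pos; lia. }
      set (s := sqrt (INR n)) in *. rewrite <- En. field. split. lra. split. lra. split. 2: lra. unfold c. intro Habs; lra.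
    + replace (Finite 1) with (Finite ((2 * (2 - 0) / (2 * INR j - 1) - sqrt PI / W * 0 - PI / W ^ 2) / c)).
      2:{ f_equal. unfold c.
          assert (Hc2 : PI * (2 * INR j - 1) < 4 * W ^ 2).
          { apply Rmult_lt_compat_r with (r := W^2 * (2*INR j - 1)) in Hc. 2: nra.
            replace (PI / W ^ 2 * (W ^ 2 * (2 * INR j - 1))) with (PI * (2 * INR j - 1)) in Hc by (field; lra).
            replace (4 / (2 * INR j - 1) * (W ^ 2 * (2 * INR j - 1))) with (4 * W^2) in Hc by (field; lra). exact Hc. }
          field. repeat split; try lra. }
      apply is_lim_seq_div'. 2: apply is_lim_seq_const. 2: unfold c; lra.
      apply is_lim_seq_minus'. apply is_lim_seq_minus'.
      * apply is_lim_seq_div'. apply is_lim_seq_mult'. apply is_lim_seq_const. apply is_lim_seq_minus'. apply is_lim_seq_const. apply lim_invn.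
        apply is_lim_seq_const. lra.
      * apply is_lim_seq_mult'. apply is_lim_seq_div'. apply lim_sqrt. left; apply PI_RGT_0. exact Y. apply is_lim_seq_const. lra. apply lim_inv_sqrtn.
      * apply is_lim_seq_div'. exact Y. apply is_lim_seq_const. nra.
Qed.

Theorem corollary3p2 :
  (forall j : nat, (1 <= j)%nat ->
     asym (fun n => ED n j) (fun n => gratio j * sqrt (INR n)) /\
     asym (fun n => VarD n j)
          (fun n => (4 / (2 * INR j - 1) - gratio j ^ 2) * INR n)) /\
  (forall jf : nat -> nat,
     (forall n, (1 <= n)%nat -> (1 <= jf n <= n)%nat) ->
     nat_to_infty jf ->
     asym (fun n => ED n (jf n)) (fun n => sqrt (INR n / INR (jf n)))) /\
  (forall jf : nat -> nat,
     (forall n, (1 <= jf n)%nat) ->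
     nat_to_infty jf ->
     Un_cv (fun n => INR (jf n) / INR n) 0 ->
     asym (fun n => VarD n (jf n)) (fun n => INR n / INR (jf n))) /\
  (forall (jf : nat -> nat) (theta : R),
     0 < theta < 1 ->
     (forall n, (1 <= jf n)%nat) ->
     Un_cv (fun n => INR (jf n) / INR n) theta ->
     Un_cv (fun n => VarD n (jf n)) (1 / theta - 1 / sqrt theta)).
Proof.
  split. exact part1. split. exact part2. split. exact part3. exact part4.
Qed.
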